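(* Assume $(-)_0\colon\mathcal E\to\mathrm{Mon}(\mathcal V)$ is $\mathcal V$-geometrical and that $U'\colon\mathrm{Mod}(\mathcal E)\to\mathcal E$ has a left adjoint $L'$. Then for every $E\in\mathcal E$ the object $\Omega:=L'E\in{}_E\mathrm{Mod}_E$ (so that $KL'E=(E_0,\Omega_0)$) together with the morphism $d\colon E_0\to\Omega_0$ determined by the unit $\eta_E\colon E\to U'L'E$ (whose underlying monoid map is $(1_{E_0},d)$) is a first order $\mathcal E$-differential calculus over $E$.
   Context: Standing: $\mathcal V$ is a monoidal additive category ($\mathbf{Ab}$-enriched, finite biproducts, tensor additive in each variable) with finite limits and colimits, tensor preserving finite colimits in each variable. $\mathrm{Mod}(\mathcal V)$: pairs $(A,M)$, $A$ monoid, $M$ an $A$-bimodule; square-zero extension $U(A,M)=A\oplus M$ with unit $(i,0)$ and multiplication $(m,\mu+\nu+0)$. $(-)_0\colon\mathcal E\to\mathrm{Mon}(\mathcal V)$ is a faithful isofibration. $\mathrm{Mod}(\mathcal E)$ is the pullback of $U$ along $(-)_0$: objects $(X,(A,M))$ with $X_0=A\oplus M$; projections $U'$ to $\mathcal E$, $K$ to $\mathrm{Mod}(\mathcal V)$. For $E\in\mathcal E$, ${}_E\mathrm{Mod}_E$ is the pullback of $M\mapsto E_0\oplus M$ (${}_{E_0}\mathrm{Mod}_{E_0}\to\mathrm{Mon}(\mathcal V)$) along $(-)_0$: objects $\Omega=(\hat E,\Omega_0)$ with $\hat E_0=E_0\oplus\Omega_0$; $U'_E(\Omega)=\hat E$;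 $V_E\colon{}_E\mathrm{Mod}_E\to\mathcal V$ sends $\Omega$ to the underlying object of $\Omega_0$. $(-)_0$ is weakly $\mathcal V$-geometrical if for all $E\in\mathcal E$, $X\in\mathrm{Mod}(\mathcal E)$ with $KX=(A,M)$ and $f\colon E\to U'X$ whose underlying map $f_0=(f_1,f_2)$ has $f_1$ mono, there exist $Y$ with $KY=(E_0,N)$, $k\colon E\to U'Y$ with $k_0=(1_{E_0},k_1)$, and $l\colon Y\to X$ with $U'l\circ k=f$; it is $\mathcal V$-geometrical if moreover each $V_E$ has a left adjoint $L_E$. A first order $\mathcal E$-differential calculus over $E$ is $\Omega\in{}_E\mathrm{Mod}_E$ with $d\colon E_0\to\Omega_0$ in $\mathcal V$ such that $(1_{E_0},d)\colon E_0\to E_0\oplus\Omega_0$ is a monoid morphism lifting to $\hat d\colon E\to U'_E(\Omega)$ in $\mathcal E$ with $\hat d_0=(1_{E_0},d)$, and the transpose $d^t\colon L_E(E_0)\to\Omega$ of $d$ under $L_E\dashv V_E$ is an epimorphism in ${}_E\mathrm{Mod}_E$. *)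

(* Defs.v *)
From Stdlib Require Import Logic.ProofIrrelevance.
Set Implicit Arguments.
Unset Strict Implicit.

Record Cat := {
  ob : Type;
  hom : ob -> ob -> Type;
  idm : forall a, hom a a;
  comp : forall {a b c}, hom b c -> hom a b -> hom a c;
  comp_id_l : forall a b (f : hom a b), comp (idm b) f = f;
  comp_id_r : forall a b (f : hom a b), comp f (idm a) = f;
  comp_assoc : forall a b c d (h : hom c d) (g : hom b c) (f : hom a b),
      comp h (comp g f) = comp (comp h g) f }.
Arguments hom {C} a b : rename.
Arguments idm {C} a : rename.
Arguments comp {C a b c} _ _ : rename.

Section CatDefs.
Variable C : Cat.
Definition IsIso {a b : ob C} (f : hom a b) : Prop :=
  exists g : hom b a, comp g f = idm a /\ comp f g = idm b.
Definition Mono {a b : ob C} (f : hom a b) : Prop :=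
  forall z (u v : hom z a), comp f u = comp f v -> u = v.
Definition IsEqualizer {a b e : ob C} (f g : hom a b) (m : hom e a) : Prop :=
  comp f m = comp g m /\
  forall z (h : hom z a), comp f h = comp g h -> exists! k : hom z e, comp m k = h.
Definition IsCoequalizer {a b c : ob C} (f g : hom a b) (q : hom b c) : Prop :=
  comp q f = comp q g /\
  forall z (h : hom b z), comp h f = comp h g -> exists! k : hom c z, comp k q = h.
End CatDefs.
Arguments IsIso {C a b} f.
Arguments Mono {C a b} f.
Arguments IsEqualizer {C a b e} f g m.
Arguments IsCoequalizer {C a b c} f g q.

Record MonAddCat (C : Cat) := {
  zer : forall {a b : ob C}, hom a b;
  add : forall {a b : ob C}, hom a b -> hom a b -> hom a b;
  opp : forall {a b : ob C}, hom a b -> hom a b;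
  add_assoc : forall a b (f g h : hom a b), add f (add g h) = add (add f g) h;
  add_comm : forall a b (f g : hom a b), add f g = add g f;
  add_0l : forall a b (f : hom a b), add zer f = f;
  add_oppl : forall a b (f : hom a b), add (opp f) f = zer;
  comp_addl : forall a b c (f g : hom b c) (h : hom a b),
      comp (add f g) h = add (comp f h) (comp g h);
  comp_addr : forall a b c (h : hom b c) (f g : hom a b),
      comp h (add f g) = add (comp h f) (comp h g);
  zob : ob C;
  zob_id : idm zob = zer;
  bp : ob C -> ob C -> ob C;
  bi1 : forall {a b}, hom a (bp a b);
  bi2 : forall {a b}, hom b (bp a b);
  bp1 : forall {a b}, hom (bp a b) a;
  bp2 : forall {a b}, hom (bp a b) b;
  bp1i1 : forall a b, comp (@bp1 a b) bi1 = idm a;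
  bp2i2 : forall a b, comp (@bp2 a b) bi2 = idm b;
  bp1i2 : forall a b, comp (@bp1 a b) bi2 = zer;
  bp2i1 : forall a b, comp (@bp2 a b) bi1 = zer;
  bp_sum : forall a b, add (comp bi1 (@bp1 a b)) (comp bi2 bp2) = idm (bp a b);
  (* finite limits (with the zero object and biproducts): equalizers;
     finite colimits: coequalizers *)
  has_equalizers : forall a b (f g : hom a b),
      exists (e : ob C) (m : hom e a), IsEqualizer f g m;
  has_coequalizers : forall a b (f g : hom a b),
      exists (c : ob C) (q : hom b c), IsCoequalizer f g q;
  ten : ob C -> ob C -> ob C;
  tenm : forall {a a' b b'}, hom a a' -> hom b b' -> hom (ten a b) (ten a' b');
  tenm_id : forall a b, tenm (idm a) (idm b) = idm (ten a b);
  tenm_comp : forall a a' a'' b b' b'' (f : hom a a') (f' : hom a' a'')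
      (g : hom b b') (g' : hom b' b''),
      tenm (comp f' f) (comp g' g) = comp (tenm f' g') (tenm f g);
  I : ob C;
  asc : forall a b c, hom (ten (ten a b) c) (ten a (ten b c));
  asci : forall a b c, hom (ten a (ten b c)) (ten (ten a b) c);
  asc_iso1 : forall a b c, comp (asci a b c) (asc a b c) = idm _;
  asc_iso2 : forall a b c, comp (asc a b c) (asci a b c) = idm _;
  asc_nat : forall a a' b b' c c' (f : hom a a') (g : hom b b') (h : hom c c'),
      comp (asc a' b' c') (tenm (tenm f g) h) = comp (tenm f (tenm g h)) (asc a b c);
  lu : forall a, hom (ten I a) a;
  lui : forall a, hom a (ten I a);
  lu_iso1 : forall a, comp (lui a) (lu a) = idm _;
  lu_iso2 : forall a, comp (lu a) (lui a) = idm _;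
  lu_nat : forall a b (f : hom a b), comp (lu b) (tenm (idm I) f) = comp f (lu a);
  ru : forall a, hom (ten a I) a;
  rui : forall a, hom a (ten a I);
  ru_iso1 : forall a, comp (rui a) (ru a) = idm _;
  ru_iso2 : forall a, comp (ru a) (rui a) = idm _;
  ru_nat : forall a b (f : hom a b), comp (ru b) (tenm f (idm I)) = comp f (ru a);
  pentagon : forall a b c d,
      comp (asc a b (ten c d)) (asc (ten a b) c d)
      = comp (tenm (idm a) (asc b c d)) (comp (asc a (ten b c) d) (tenm (asc a b c) (idm d)));
  triangle : forall a b,
      comp (tenm (idm a) (lu b)) (asc a I b) = tenm (ru a) (idm b);
  tenm_addl : forall a a' b b' (f g : hom a a') (h : hom b b'),
      tenm (add f g) h = add (tenm f h) (tenm g h);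
  tenm_addr : forall a a' b b' (h : hom a a') (f g : hom b b'),
      tenm h (add f g) = add (tenm h f) (tenm h g);
  (* tensor preserves finite colimits in each variable (initial objects and
     binary coproducts are preserved by additivity; coequalizers: *)
  ten_pres_coeq_l : forall x a b c (f g : hom a b) (q : hom b c),
      IsCoequalizer f g q ->
      IsCoequalizer (tenm (idm x) f) (tenm (idm x) g) (tenm (idm x) q);
  ten_pres_coeq_r : forall x a b c (f g : hom a b) (q : hom b c),
      IsCoequalizer f g q ->
      IsCoequalizer (tenm f (idm x)) (tenm g (idm x)) (tenm q (idm x))
}.
Arguments zer {C M a b} : rename.
Arguments add {C M a b} _ _ : rename.
Arguments opp {C M a b} _ : rename.
Arguments bp {C} M _ _ : rename.
Arguments bi1 {C M a b} : rename.
Arguments bi2 {C M a b} : rename.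
Arguments bp1 {C M a b} : rename.
Arguments bp2 {C M a b} : rename.
Arguments ten {C} M _ _ : rename.
Arguments tenm {C M a a' b b'} _ _ : rename.
Arguments I {C} M : rename.
Arguments asc {C M} a b c : rename.
Arguments lu {C M} a : rename.
Arguments ru {C M} a : rename.

Definition castV {C : Cat} {a a' b b' : ob C} (p : a = a') (q : b = b')
  (h : hom a b) : hom a' b' :=
  match p in _ = x return hom x b' with
  | eq_refl => match q in _ = y return hom a y with eq_refl => h end
  end.

Section Monoids.
Variables (C : Cat) (M : MonAddCat C).

Record MonData := { mcar : ob C;
                    mmul : hom (ten M mcar mcar) mcar;
                    munit : hom (I M) mcar }.

Definition IsMonoid (A : MonData) : Prop :=
  comp (mmul A) (tenm (mmul A) (idm _))
    = comp (mmul A) (comp (tenm (idm _) (mmul A)) (asc _ _ _)) /\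
  comp (mmul A) (tenm (munit A) (idm _)) = lu _ /\
  comp (mmul A) (tenm (idm _) (munit A)) = ru _.

Definition IsMonHom (A B : MonData) (f : hom (mcar A) (mcar B)) : Prop :=
  comp f (mmul A) = comp (mmul B) (tenm f f) /\ comp f (munit A) = munit B.

Record BimodData (A : MonData) := { bcar : ob C;
                                    bl : hom (ten M (mcar A) bcar) bcar;
                                    br : hom (ten M bcar (mcar A)) bcar }.

Definition IsBimod (A : MonData) (N : BimodData A) : Prop :=
  comp (bl N) (tenm (mmul A) (idm _)) = comp (bl N) (comp (tenm (idm _) (bl N)) (asc _ _ _)) /\
  comp (bl N) (tenm (munit A) (idm _)) = lu _ /\
  comp (br N) (tenm (br N) (idm _)) = comp (br N) (comp (tenm (idm _) (mmul A)) (asc _ _ _)) /\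
  comp (br N) (tenm (idm _) (munit A)) = ru _ /\
  comp (bl N) (comp (tenm (idm _) (br N)) (asc _ _ _)) = comp (br N) (tenm (bl N) (idm _)).

Definition IsBimodHom (A B : MonData) (f : hom (mcar A) (mcar B))
  (N : BimodData A) (N' : BimodData B) (g : hom (bcar N) (bcar N')) : Prop :=
  comp g (bl N) = comp (bl N') (tenm f g) /\ comp g (br N) = comp (br N') (tenm g f).

Definition pairing {x a b : ob C} (f1 : hom x a) (f2 : hom x b) : hom x (bp M a b) :=
  add (M:=M) (comp bi1 f1) (comp bi2 f2).

(* square-zero extension U(A,N) = A (+) N, unit (i,0), multiplication (m, mu+nu+0) *)
Definition sqz (A : MonData) (N : BimodData A) : MonData := {|
  mcar := bp M (mcar A) (bcar N);
  mmul := add (M:=M) (comp bi1 (comp (mmul A) (tenm bp1 bp1)))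
              (comp bi2 (add (M:=M) (comp (bl N) (tenm bp1 bp2)) (comp (br N) (tenm bp2 bp1))));
  munit := comp bi1 (munit A) |}.

Definition sqzmap {a a' b b' : ob C} (f : hom a a') (g : hom b b')
  : hom (bp M a b) (bp M a' b') :=
  add (M:=M) (comp bi1 (comp f bp1)) (comp bi2 (comp g bp2)).
End Monoids.
Arguments mcar {C M} _.
Arguments mmul {C M} _.
Arguments munit {C M} _.
Arguments bcar {C M A} _.
Arguments bl {C M A} _.
Arguments br {C M A} _.
Arguments IsMonoid {C M} A.
Arguments IsMonHom {C M} A B f.
Arguments IsBimod {C M} A N.
Arguments IsBimodHom {C M A B} f {N N'} g.
Arguments pairing {C M x a b} f1 f2.
Arguments sqz {C M} A N.
Arguments sqzmap {C M a a' b b'} f g.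

Record MonFunctor (C : Cat) (M : MonAddCat C) (E : Cat) := {
  F0 : ob E -> MonData M;
  F1 : forall {X Y : ob E}, hom X Y -> hom (mcar (F0 X)) (mcar (F0 Y));
  F0_mon : forall X, IsMonoid (F0 X);
  F1_hom : forall X Y (u : hom X Y), IsMonHom (F0 X) (F0 Y) (F1 u);
  F1_id : forall X, F1 (idm X) = idm _;
  F1_comp : forall X Y Z (v : hom Y Z) (u : hom X Y), F1 (comp v u) = comp (F1 v) (F1 u) }.
Arguments F0 {C M E} F _ : rename.
Arguments F1 {C M E} F {X Y} _ : rename.
Arguments F0_mon {C M E} F X : rename.

Section Fib.
Variables (C : Cat) (M : MonAddCat C) (E : Cat) (F : MonFunctor M E).

Definition Faithful : Prop :=
  forall X Y (u v : hom X Y), F1 F u = F1 F v -> u = v.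

Definition Isofibration : Prop :=
  forall (X : ob E) (B : MonData M) (phi : hom (mcar (F0 F X)) (mcar B)),
    IsMonoid B -> IsMonHom (F0 F X) B phi -> IsIso phi ->
    exists (Y : ob E) (psi : hom X Y) (e : F0 F Y = B),
      IsIso psi /\ castV eq_refl (f_equal mcar e) (F1 F psi) = phi.

(* -------- Mod(E): pullback of U along (-)_0 -------- *)
Record ModEOb := {
  mx : ob E;
  mA : MonData M;
  mM : BimodData mA;
  me : F0 F mx = sqz mA mM;
  mA_mon : IsMonoid mA;
  mM_bimod : IsBimod mA mM }.

Record ModEHom (X Y : ModEOb) := {
  mu : hom (mx X) (mx Y);
  mf : hom (mcar (mA X)) (mcar (mA Y));
  mg : hom (bcar (mM X)) (bcar (mM Y));
  mf_hom : IsMonHom (mA X) (mA Y) mf;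
  mg_hom : IsBimodHom mf mg;
  mu_over : castV (f_equal mcar (me X)) (f_equal mcar (me Y)) (F1 F mu) = sqzmap mf mg }.

Definition UnivArrowU' (e : ob E) (Y : ModEOb) (eta : hom e (mx Y)) : Prop :=
  forall (Z : ModEOb) (f : hom e (mx Z)),
    exists! g : ModEHom Y Z, comp (mu g) eta = f.

Definition HasLeftAdjointU' : Prop :=
  forall e : ob E, exists (Y : ModEOb) (eta : hom e (mx Y)), UnivArrowU' eta.

Record EModOb (e : ob E) := {
  Eh : ob E;
  Om : BimodData (F0 F e);
  Oe : F0 F Eh = sqz (F0 F e) Om;
  Om_bimod : IsBimod (F0 F e) Om }.

Record EModHom (e : ob E) (O O' : EModOb e) := {
  eu : hom (Eh O) (Eh O');
  eh : hom (bcar (Om O)) (bcar (Om O'));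
  eh_hom : IsBimodHom (idm (mcar (F0 F e))) eh;
  eu_over : castV (f_equal mcar (Oe O)) (f_equal mcar (Oe O')) (F1 F eu)
            = sqzmap (idm _) eh }.

Definition inclE (e : ob E) (O : EModOb e) : ModEOb :=
  {| mx := Eh O; mA := F0 F e; mM := Om O; me := Oe O;
     mA_mon := F0_mon F e; mM_bimod := Om_bimod O |}.

(* epimorphisms in {}_E Mod_E (composition is componentwise) *)
Definition EpiEMod (e : ob E) (O O' : EModOb e) (g : EModHom O O') : Prop :=
  forall (O'' : EModOb e) (p q : EModHom O' O''),
    comp (eu p) (eu g) = comp (eu q) (eu g) ->
    comp (eh p) (eh g) = comp (eh q) (eh g) -> p = q.

(* V_E : {}_E Mod_E -> V,  O |-> underlying object of O_0;  left adjoint L_E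
   given by universal arrows *)
Record LeftAdjV (e : ob E) := {
  la_ob : ob C -> EModOb e;
  la_unit : forall x : ob C, hom x (bcar (Om (la_ob x)));
  la_univ : forall (x : ob C) (O : EModOb e) (f : hom x (bcar (Om O))),
      exists! g : EModHom (la_ob x) O, comp (eh g) (la_unit x) = f }.

Definition WeaklyVGeometrical : Prop :=
  forall (e : ob E) (X : ModEOb) (f : hom e (mx X)),
    Mono (comp bp1 (castV eq_refl (f_equal mcar (me X)) (F1 F f))) ->
    exists (Yx : ob E) (N : BimodData (F0 F e)) (eY : F0 F Yx = sqz (F0 F e) N)
           (HN : IsBimod (F0 F e) N),
      let Y := {| mx := Yx; mA := F0 F e; mM := N; me := eY;
                  mA_mon := F0_mon F e; mM_bimod := HN |} in
      exists (k : hom e Yx) (l : ModEHom Y X),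
        (exists k1 : hom (mcar (F0 F e)) (bcar N),
            castV eq_refl (f_equal mcar eY) (F1 F k) = pairing (idm _) k1) /\
        comp (mu l) k = f.

Definition VGeometrical : Prop :=
  WeaklyVGeometrical /\ forall e : ob E, inhabited (LeftAdjV e).

Definition FirstOrderCalculus (e : ob E) (L : LeftAdjV e) (O : EModOb e)
  (d : hom (mcar (F0 F e)) (bcar (Om O))) : Prop :=
  IsMonHom (F0 F e) (sqz (F0 F e) (Om O)) (pairing (idm _) d) /\
  (exists dh : hom e (Eh O),
      castV eq_refl (f_equal mcar (Oe O)) (F1 F dh) = pairing (idm _) d) /\
  (exists dt : EModHom (la_ob L (mcar (F0 F e))) O,
      comp (eh dt) (la_unit L (mcar (F0 F e))) = d /\ EpiEMod dt).
End Fib.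
Arguments UnivArrowU' {C M E F e} Y eta.
Arguments FirstOrderCalculus {C M E F e} L O d.
Arguments EpiEMod {C M E F e O O'} g.
Arguments inclE {C M E F e} O.

(* Main.v *)
Require Import Defs.
From Stdlib Require Import Logic.ProofIrrelevance.
Set Implicit Arguments.
Unset Strict Implicit.

Section Casts.
Variable C : Cat.
Lemma castV_comp (a a' b b' c c' : ob C) (p : a = a') (r : b = b') (q : c = c')
  (g : hom b c) (f : hom a b) :
  castV p q (comp g f) = comp (castV r q g) (castV p r f).
Proof. destruct p, q, r; reflexivity. Qed.
Lemma castV_idm (a a' : ob C) (p : a = a') : castV p p (idm a) = idm a'.
Proof. destruct p; reflexivity. Qed.
Lemma castV_inj (a a' b b' : ob C) (p : a = a') (q : b = b') (f g : hom a b) :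
  castV p q f = castV p q g -> f = g.
Proof. destruct p, q; exact (fun h => h). Qed.
Lemma castV_split (a a' b b' : ob C) (p : a = a') (q : b = b') (h : hom a b) :
  castV p q h = comp (castV eq_refl q h) (castV p eq_refl (idm a)).
Proof. destruct p, q; simpl; now rewrite comp_id_r. Qed.
End Casts.

Section Alg.
Variables (C : Cat) (M : MonAddCat C).
Notation z := (@zer C M _ _).
Notation "f +' g" := (add (M:=M) f g) (at level 50, left associativity).

Lemma add_0r a b (f : hom a b) : f +' z = f.
Proof. rewrite add_comm; apply add_0l. Qed.



Lemma self_zero a b (x : hom a b) : x = x +' x -> z = x.
Proof.
  intro H. transitivity (add (M:=M) (opp (M:=M) x) (x +' x)).
  - rewrite <- H. symmetry; apply add_oppl.
  - rewrite add_assoc, add_oppl, add_0l. reflexivity.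
Qed.

Lemma comp_zer_l a b c (f : hom a b) : comp (@zer C M b c) f = z.
Proof.
  symmetry; apply self_zero. rewrite <- comp_addl, add_0l. reflexivity.
Qed.
Lemma comp_zer_r a b c (f : hom b c) : comp f (@zer C M a b) = z.
Proof.
  symmetry; apply self_zero. rewrite <- comp_addr, add_0l. reflexivity.
Qed.
Lemma zob_unique a (f g : hom a (zob M)) : f = g.
Proof.
  rewrite <- (comp_id_l f), <- (comp_id_l g), zob_id, !comp_zer_l. reflexivity.
Qed.

Lemma bp_ext x a b (h k : hom x (bp M a b)) :
  comp bp1 h = comp bp1 k -> comp bp2 h = comp bp2 k -> h = k.
Proof.
  intros H1 H2. rewrite <- (comp_id_l h), <- (comp_id_l k), <- bp_sum, !comp_addl,
    <- !comp_assoc, H1, H2. reflexivity.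
Qed.

Lemma bp1_pairing x a b (f : hom x a) (g : hom x b) : comp bp1 (pairing (M:=M) f g) = f.
Proof.
  unfold pairing. rewrite comp_addr, !comp_assoc, bp1i1, bp1i2, comp_id_l, comp_zer_l, add_0r.
  reflexivity.
Qed.
Lemma bp2_pairing x a b (f : hom x a) (g : hom x b) : comp bp2 (pairing (M:=M) f g) = g.
Proof.
  unfold pairing. rewrite comp_addr, !comp_assoc, bp2i2, bp2i1, comp_id_l, comp_zer_l, add_0l.
  reflexivity.
Qed.
Lemma pairing_eta x a b (h : hom x (bp M a b)) : h = pairing (comp bp1 h) (comp bp2 h).
Proof. apply bp_ext; now rewrite ?bp1_pairing, ?bp2_pairing. Qed.
Lemma pairing_comp y x a b (f : hom x a) (g : hom x b) (h : hom y x) :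
  comp (pairing (M:=M) f g) h = pairing (comp f h) (comp g h).
Proof.
  apply bp_ext; rewrite comp_assoc, ?bp1_pairing, ?bp2_pairing; reflexivity.
Qed.
Lemma bp1_sqzmap a a' b b' (f : hom a a') (g : hom b b') :
  comp bp1 (sqzmap (M:=M) f g) = comp f bp1.
Proof. apply (bp1_pairing (comp f bp1) (comp g bp2)). Qed.
Lemma bp2_sqzmap a a' b b' (f : hom a a') (g : hom b b') :
  comp bp2 (sqzmap (M:=M) f g) = comp g bp2.
Proof. apply (bp2_pairing (comp f bp1) (comp g bp2)). Qed.
Lemma sqzmap_pairing x a a' b b' (f : hom a a') (g : hom b b') (u : hom x a) (v : hom x b) :
  comp (sqzmap (M:=M) f g) (pairing u v) = pairing (comp f u) (comp g v).
Proof.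
  apply bp_ext; rewrite comp_assoc, ?bp1_sqzmap, ?bp2_sqzmap, <- comp_assoc,
    ?bp1_pairing, ?bp2_pairing; reflexivity.
Qed.
Lemma sqzmap_comp a a' a'' b b' b'' (f : hom a a') (g : hom b b') (f' : hom a' a'') (g' : hom b' b'') :
  comp (sqzmap (M:=M) f' g') (sqzmap f g) = sqzmap (comp f' f) (comp g' g).
Proof.
  apply bp_ext; rewrite comp_assoc, ?bp1_sqzmap, ?bp2_sqzmap, <- comp_assoc,
    ?bp1_sqzmap, ?bp2_sqzmap, comp_assoc; reflexivity.
Qed.
Lemma sqzmap_id a b : sqzmap (M:=M) (idm a) (idm b) = idm _.
Proof.
  apply bp_ext; rewrite ?bp1_sqzmap, ?bp2_sqzmap, comp_id_l, comp_id_r; reflexivity.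
Qed.
End Alg.

Section Mon.
Variables (C : Cat) (M : MonAddCat C).

Lemma tc a a' a'' b b' b'' (f : hom a a') (f' : hom a' a'') (g : hom b b') (g' : hom b' b'') :
  comp (tenm (M:=M) f' g') (tenm f g) = tenm (comp f' f) (comp g' g).
Proof. symmetry; apply tenm_comp. Qed.
Lemma tcx x a a' a'' b b' b'' (f : hom a a') (f' : hom a' a'') (g : hom b b') (g' : hom b' b'')
  (h : hom x (ten M a b)) :
  comp (tenm (M:=M) f' g') (comp (tenm f g) h) = comp (tenm (comp f' f) (comp g' g)) h.
Proof. rewrite comp_assoc, tc; reflexivity. Qed.

Lemma monhom_id (A : MonData M) : IsMonHom A A (idm _).
Proof. split; rewrite ?tenm_id, comp_id_l, ?comp_id_r; reflexivity. Qed.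

Lemma monhom_comp (A B D : MonData M) f g :
  IsMonHom A B f -> IsMonHom B D g -> IsMonHom A D (comp g f).
Proof.
  intros [f1 f2] [g1 g2]; split.
  - rewrite <- comp_assoc, f1, comp_assoc, g1, <- comp_assoc, tc; reflexivity.
  - rewrite <- comp_assoc, f2, g2; reflexivity.
Qed.

Lemma monhom_inv (A B : MonData M) f g :
  IsMonHom A B f -> comp g f = idm _ -> comp f g = idm _ -> IsMonHom B A g.
Proof.
  intros [f1 f2] gf fg; split.
  - rewrite <- (comp_id_r (mmul B)), <- tenm_id, <- fg, tenm_comp, (comp_assoc (mmul B)),
      <- f1, (comp_assoc g), (comp_assoc g f), gf, comp_id_l. reflexivity.
  - rewrite <- f2, comp_assoc, gf, comp_id_l. reflexivity.
Qed.

Lemma monhom_cast (A B B' : MonData M) (e : B = B') f :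
  IsMonHom A B f -> IsMonHom A B' (castV eq_refl (f_equal mcar e) f).
Proof. destruct e; auto. Qed.


Lemma cancel_r (a b x : ob C) (f : hom a b) (g : hom b a) (h : hom x a) :
  comp g f = idm _ -> comp g (comp f h) = h.
Proof. intro H; rewrite comp_assoc, H, comp_id_l; reflexivity. Qed.

Ltac norm := repeat rewrite <- comp_assoc; repeat (rewrite tcx || rewrite tc);
  repeat rewrite comp_id_l; repeat rewrite comp_id_r.

Lemma monoid_transfer (A B : MonData M) f g :
  IsMonoid A -> IsMonHom A B f -> comp g f = idm _ -> comp f g = idm _ -> IsMonoid B.
Proof.
  intros [a1 [a2 a3]] [f1 f2] gf fg.
  assert (K : mmul B = comp f (comp (mmul A) (tenm g g))).
  { rewrite comp_assoc, f1, <- comp_assoc, tc, fg, tenm_id, comp_id_r; reflexivity. }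
  assert (U : munit B = comp f (munit A)) by (symmetry; exact f2).
  split; [|split]; rewrite K, ?U; norm; rewrite ?(cancel_r _ gf); norm.
  - assert (E1 : tenm (M:=M) (comp (mmul A) (tenm g g)) g
           = comp (tenm (mmul A) (idm _)) (tenm (tenm g g) g)) by (rewrite tc, comp_id_l; reflexivity).
    assert (E2 : tenm (M:=M) g (comp (mmul A) (tenm g g))
           = comp (tenm (idm _) (mmul A)) (tenm g (tenm g g))) by (rewrite tc, comp_id_l; reflexivity).
    rewrite E1, E2, (comp_assoc (mmul A)), a1, <- !comp_assoc, asc_nat. reflexivity.
  - assert (E1 : tenm (M:=M) (munit A) g = comp (tenm (munit A) (idm _)) (tenm (idm _) g))
      by (rewrite tc, comp_id_l, comp_id_r; reflexivity).
    rewrite E1, (comp_assoc (mmul A)), a2, lu_nat, comp_assoc, fg, comp_id_l; reflexivity.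
  - assert (E1 : tenm (M:=M) g (munit A) = comp (tenm (idm _) (munit A)) (tenm g (idm _)))
      by (rewrite tc, comp_id_l, comp_id_r; reflexivity).
    rewrite E1, (comp_assoc (mmul A)), a3, ru_nat, comp_assoc, fg, comp_id_l; reflexivity.
Qed.

Lemma tsl a a' a'' b b' (f : hom a' a'') (g : hom a a') (k : hom b b') :
  tenm (M:=M) (comp f g) k = comp (tenm f (idm _)) (tenm g k).
Proof. rewrite tc, comp_id_l; reflexivity. Qed.
Lemma tsr a a' a'' b b' (f : hom a' a'') (g : hom a a') (k : hom b b') :
  tenm (M:=M) k (comp f g) = comp (tenm (idm _) f) (tenm k g).
Proof. rewrite tc, comp_id_l; reflexivity. Qed.

Definition restr (A A' : MonData M) (h : hom (mcar A') (mcar A)) (N : BimodData A)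
  : BimodData A' :=
  {| bcar := bcar N; bl := comp (bl N) (tenm h (idm _));
     br := comp (br N) (tenm (idm _) h) |}.

Lemma bimod_restrict (A A' : MonData M) h (N : BimodData A) :
  IsMonHom A' A h -> IsBimod A N -> IsBimod A' (restr h N).
Proof.
  intros [h1 h2] [n1 [n2 [n3 [n4 n5]]]].
  unfold IsBimod, restr; simpl.
  split; [|split; [|split; [|split]]]; norm.
  - rewrite h1, tsl, (comp_assoc (bl N)), n1. norm. rewrite asc_nat. norm. reflexivity.
  - rewrite h2; exact n2.
  - rewrite h1, tsl, (comp_assoc (br N)), n3. norm. rewrite asc_nat. norm. reflexivity.
  - rewrite h2; exact n4.
  - rewrite tsr, tsl. repeat rewrite <- comp_assoc. rewrite <- asc_nat.
    rewrite (comp_assoc (tenm (idm _) (br N))), (comp_assoc (bl N)), n5. norm. reflexivity.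
Qed.
End Mon.

Section Sqz.
Variables (C : Cat) (M : MonAddCat C).
Ltac norm := repeat rewrite <- comp_assoc; repeat (rewrite tcx || rewrite tc);
  repeat rewrite comp_id_l; repeat rewrite comp_id_r.

Lemma bp1_mul (A : MonData M) (N : BimodData A) :
  comp bp1 (mmul (sqz A N)) = comp (mmul A) (tenm bp1 bp1).
Proof. apply bp1_pairing. Qed.
Lemma bp2_mul (A : MonData M) (N : BimodData A) :
  comp bp2 (mmul (sqz A N)) =
  add (M:=M) (comp (bl N) (tenm bp1 bp2)) (comp (br N) (tenm bp2 bp1)).
Proof. apply bp2_pairing. Qed.
Lemma sqzmap_bi1 a a' b b' (f : hom a a') (g : hom b b') :
  comp (sqzmap (M:=M) f g) bi1 = comp bi1 f.
Proof.
  apply bp_ext.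
  - rewrite comp_assoc, bp1_sqzmap, <- (comp_assoc f), bp1i1, comp_id_r,
      (comp_assoc bp1), bp1i1, comp_id_l. reflexivity.
  - rewrite comp_assoc, bp2_sqzmap, <- (comp_assoc g), bp2i1, comp_zer_r,
      (comp_assoc bp2), bp2i1, comp_zer_l. reflexivity.
Qed.

Lemma bp1_add x a b (f : hom x a) (g : hom x b) :
  comp (bp1 (M:=M)) (add (M:=M) (comp bi1 f) (comp bi2 g)) = f.
Proof. apply bp1_pairing. Qed.
Lemma bp2_add x a b (f : hom x a) (g : hom x b) :
  comp (bp2 (M:=M)) (add (M:=M) (comp bi1 f) (comp bi2 g)) = g.
Proof. apply bp2_pairing. Qed.
Lemma pa_comp y x a b (f : hom x a) (g : hom x b) (h : hom y x) :
  comp (add (M:=M) (comp (bi1 (M:=M)) f) (comp bi2 g)) h = add (M:=M) (comp (bi1 (M:=M)) (comp f h)) (comp bi2 (comp g h)).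
Proof. apply pairing_comp. Qed.

Lemma monhom_sqzmap (A A' : MonData M) (N : BimodData A) j h :
  IsMonHom A A' j -> comp h j = idm _ ->
  IsMonHom (sqz A N) (sqz A' (restr h N)) (sqzmap j (idm _)).
Proof.
  intros [j1 j2] hj; split.
  - cbn [mcar mmul munit sqz restr bl br bcar].
    apply bp_ext; rewrite pa_comp.
    + rewrite bp1_add, (comp_assoc bp1), bp1_sqzmap, <- (comp_assoc j), bp1_add,
        (comp_assoc j), j1. norm. rewrite !bp1_sqzmap. reflexivity.
    + rewrite bp2_add, (comp_assoc bp2), bp2_sqzmap, <- (comp_assoc (idm _)), bp2_add,
        comp_id_l, comp_addl. norm.
      rewrite ?bp1_sqzmap, ?bp2_sqzmap. norm.
      rewrite ?bp1_sqzmap, ?bp2_sqzmap. rewrite !(cancel_r _ hj). reflexivity.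
  - cbn [mcar mmul munit sqz restr bl br bcar].
    rewrite comp_assoc, sqzmap_bi1, <- comp_assoc, j2. reflexivity.
Qed.

Lemma monoid_sqz_restr (A A' : MonData M) (N : BimodData A) j h :
  IsMonoid (sqz A N) -> IsMonHom A A' j -> comp h j = idm _ -> comp j h = idm _ ->
  IsMonoid (sqz A' (restr h N)).
Proof.
  intros HA Hj hj jh.
  apply (@monoid_transfer C M (sqz A N) (sqz A' (restr h N)) (sqzmap j (idm _))
     (sqzmap h (idm _)) HA (monhom_sqzmap N Hj hj)).
  - simpl; rewrite sqzmap_comp, hj, comp_id_l, sqzmap_id; reflexivity.
  - simpl; rewrite sqzmap_comp, jh, comp_id_l, sqzmap_id; reflexivity.
Qed.

Definition Z0 (A : MonData M) : BimodData A :=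
  {| bcar := zob M; bl := zer (M:=M); br := zer (M:=M) |}.

Lemma bimod_Z0 (A : MonData M) : IsBimod A (Z0 A).
Proof. repeat split; apply zob_unique. Qed.

Lemma monhom_bi1 (A : MonData M) : IsMonHom A (sqz A (Z0 A)) bi1.
Proof.
  split.
  - cbn [mcar mmul munit sqz bcar Z0 bl br]. apply bp_ext.
    + rewrite pa_comp, bp1_add, (comp_assoc bp1 bi1), bp1i1, comp_id_l. norm.
      rewrite bp1i1, tenm_id, comp_id_r; reflexivity.
    + apply zob_unique.
  - reflexivity.
Qed.

Lemma monoid_Z0 (A : MonData M) : IsMonoid A -> IsMonoid (sqz A (Z0 A)).
Proof.
  intro HA. apply (@monoid_transfer C M A (sqz A (Z0 A)) bi1 bp1 HA (monhom_bi1 A)).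
  - apply bp1i1.
  - cbn [mcar mmul munit sqz bcar Z0 bl br]. apply bp_ext.
    + rewrite comp_assoc, bp1i1, comp_id_l, comp_id_r; reflexivity.
    + apply zob_unique.
Qed.
End Sqz.

Section Main.
Variables (C : Cat) (M : MonAddCat C) (E : Cat) (F : MonFunctor M E).

Lemma over_comp (x : ob E) (X Z : ModEOb F) (g : ModEHom X Z) (u : hom x (mx X)) :
  castV eq_refl (f_equal mcar (me Z)) (F1 F (comp (mu g) u))
  = comp (sqzmap (mf g) (mg g)) (castV eq_refl (f_equal mcar (me X)) (F1 F u)).
Proof. rewrite F1_comp, (castV_comp _ (f_equal mcar (me X))), mu_over. reflexivity. Qed.

Definition compM (X Y Z : ModEOb F) (v : ModEHom Y Z) (u : ModEHom X Y) : ModEHom X Z.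
Proof.
  refine {| mu := comp (mu v) (mu u); mf := comp (mf v) (mf u); mg := comp (mg v) (mg u) |}.
  - apply monhom_comp; apply mf_hom.
  - destruct (mg_hom u) as [u1 u2], (mg_hom v) as [v1 v2]. split.
    + rewrite <- comp_assoc, u1, comp_assoc, v1, <- comp_assoc, tc; reflexivity.
    + rewrite <- comp_assoc, u2, comp_assoc, v2, <- comp_assoc, tc; reflexivity.
  - rewrite F1_comp, (castV_comp _ (f_equal mcar (me Y))), !mu_over. apply sqzmap_comp.
Defined.

Definition idM (X : ModEOb F) : ModEHom X X.
Proof.
  refine {| mu := idm _; mf := idm _; mg := idm _ |}.
  - apply monhom_id.
  - split; rewrite tenm_id, comp_id_l, comp_id_r; reflexivity.
  - rewrite F1_id, castV_idm, sqzmap_id. reflexivity.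
Defined.

Lemma modE_ext (X Y : ModEOb F) (u v : ModEHom X Y) :
  mu u = mu v -> mf u = mf v -> mg u = mg v -> u = v.
Proof.
  destruct u, v; simpl; intros; subst. f_equal; apply proof_irrelevance.
Qed.

Lemma emod_ext (e : ob E) (O O' : EModOb F e) (p q : EModHom O O') :
  eu p = eu q -> eh p = eh q -> p = q.
Proof.
  destruct p, q; simpl; intros; subst. f_equal; apply proof_irrelevance.
Qed.

Definition toM (e : ob E) (O O' : EModOb F e) (p : EModHom O O') : ModEHom (inclE O) (inclE O') :=
  @Build_ModEHom C M E F (inclE O) (inclE O') (eu p) (idm _) (eh p) (monhom_id _)
     (eh_hom p) (eu_over p).
End Main.

Lemma castV_cancel1 (C : Cat) (a a' : ob C) (p : a = a') :
  comp (castV p eq_refl (idm a)) (castV eq_refl p (idm a)) = idm a.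
Proof. destruct p; apply comp_id_l. Qed.
Lemma castV_cancel2 (C : Cat) (a a' : ob C) (p : a = a') :
  comp (castV eq_refl p (idm a)) (castV p eq_refl (idm a)) = idm a'.
Proof. destruct p; apply comp_id_l. Qed.

Lemma iso_bi1 (C : Cat) (M : MonAddCat C) (A : MonData M) :
  IsIso (C:=C) (a:=mcar A) (b:=mcar (sqz A (Z0 A))) bi1.
Proof.
  exists bp1. split.
  - apply bp1i1.
  - cbn [mcar sqz bcar Z0]. apply bp_ext.
    + rewrite comp_assoc, bp1i1, comp_id_l, comp_id_r; reflexivity.
    + apply zob_unique.
Qed.

Lemma over_compE (C : Cat) (M : MonAddCat C) (E : Cat) (F : MonFunctor M E)
  (e x : ob E) (O O' : EModOb F e) (p : EModHom O O') (u : hom x (Eh O)) :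
  castV eq_refl (f_equal mcar (Oe O')) (F1 F (comp (eu p) u))
  = comp (sqzmap (idm _) (eh p)) (castV eq_refl (f_equal mcar (Oe O)) (F1 F u)).
Proof. rewrite F1_comp, (castV_comp _ (f_equal mcar (Oe O))), eu_over. reflexivity. Qed.

Ltac norm := repeat rewrite <- comp_assoc; repeat (rewrite tcx || rewrite tc);
  repeat rewrite comp_id_l; repeat rewrite comp_id_r.

Theorem proposition4p11 (C : Cat) (M : MonAddCat C) (E : Cat) (F : MonFunctor M E)
  (Hfaith : Faithful F) (Hisofib : Isofibration F)
  (Hgeo : VGeometrical F)
  (LE : forall e : ob E, LeftAdjV F e)
  (HL' : HasLeftAdjointU' F) :
  forall e : ob E,
    exists (O : EModOb F e) (d : hom (mcar (F0 F e)) (bcar (Om O))) (eta : hom e (Eh O)),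
      UnivArrowU' (inclE O) eta /\
      castV eq_refl (f_equal mcar (Oe O)) (F1 F eta) = pairing (idm _) d /\
      FirstOrderCalculus (LE e) O d.
Proof.
  intros e.
  destruct Hgeo as [Hw _].
  destruct (HL' e) as [Y [eta Hu]].
  set (c := castV eq_refl (f_equal mcar (me Y)) (F1 F eta)).
  destruct (Hisofib e (sqz (F0 F e) (Z0 (F0 F e))) bi1 (monoid_Z0 (F0_mon F e))
              (monhom_bi1 _) (iso_bi1 _)) as [Y0 [psi0 [e1 [_ Hpsi0]]]].
  set (Z := {| mx := Y0; mA := F0 F e; mM := Z0 _; me := e1; mA_mon := F0_mon F e;
               mM_bimod := bimod_Z0 _ |}).
  destruct (Hu Z psi0) as [g0 [Hg0 _]].
  assert (H0 : comp (mf g0) (comp bp1 c) = idm _).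
  { pose proof (over_comp g0 eta) as Ho. rewrite Hg0 in Ho. unfold Z in Ho; cbn [mx mA mM me] in Ho.
    rewrite Hpsi0 in Ho. fold c in Ho.
    apply (f_equal (comp bp1)) in Ho. rewrite bp1i1, comp_assoc, bp1_sqzmap in Ho.
    rewrite <- comp_assoc in Ho. symmetry; exact Ho. }
  assert (Hmono : Mono (comp bp1 c)).
  { intros z u v H. rewrite <- (comp_id_l u), <- (comp_id_l v), <- H0, <- !(comp_assoc (mf g0) (comp bp1 c)), H.
    reflexivity. }
  destruct (Hw e Y eta Hmono) as [Yx [N [eY [HN HH]]]].
  cbv zeta in HH. destruct HH as [k [l [[k1 Hk1] Hlk]]].
  set (Y' := {| mx := Yx; mA := F0 F e; mM := N; me := eY; mA_mon := F0_mon F e;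
               mM_bimod := HN |}) in *.
  destruct (Hu Y' k) as [g' [Hg' _]].
  assert (Hlg : compM l g' = idM Y).
  { destruct (Hu Y eta) as [g1 [_ Hun]].
    rewrite <- (Hun (compM l g')), <- (Hun (idM Y)); [reflexivity | |].
    - simpl; apply comp_id_l.
    - simpl. rewrite <- comp_assoc. transitivity (comp (mu l) k); [f_equal; exact Hg' | exact Hlk]. }
  assert (Hhj : comp (mf l) (mf g') = idm _) by exact (f_equal (@mf _ _ _ _ _ _) Hlg).
  assert (Hc1 : comp bp1 c = mf l).
  { pose proof (over_comp l k) as Ho. rewrite Hlk in Ho. fold c in Ho.
    unfold Y' in Ho; cbn [mx mA mM me] in Ho. rewrite Hk1, sqzmap_pairing in Ho.
    rewrite Ho, bp1_pairing, comp_id_r. reflexivity. }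
  assert (Hjh : comp (mf g') (mf l) = idm _).
  { pose proof (over_comp g' eta) as Ho. rewrite Hg' in Ho. fold c in Ho.
    unfold Y' in Ho; cbn [mx mA mM me] in Ho. rewrite Hk1 in Ho.
    apply (f_equal (comp bp1)) in Ho. rewrite bp1_pairing, comp_assoc, bp1_sqzmap in Ho.
    rewrite <- comp_assoc, Hc1 in Ho. symmetry; exact Ho. }
  pose (h1 := mf l : hom (mcar (F0 F e)) (mcar (mA Y))).
  pose (j := mf g' : hom (mcar (mA Y)) (mcar (F0 F e))).
  assert (Hh1 : IsMonHom (F0 F e) (mA Y) h1) by exact (mf_hom l).
  assert (Hj : IsMonHom (mA Y) (F0 F e) j) by exact (mf_hom g').
  assert (Hhj' : comp h1 j = idm _) by exact Hhj.
  assert (Hjh' : comp j h1 = idm _) by exact Hjh.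
  assert (Hc1' : comp bp1 c = h1) by exact Hc1.
  clearbody h1 j. clear Hhj Hjh Hc1 Hlg.
  pose (N' := restr (A:=mA Y) (A':=F0 F e) h1 (mM Y)).
  assert (HN' : IsBimod (F0 F e) N') by exact (bimod_restrict Hh1 (mM_bimod Y)).
  assert (HA : IsMonoid (sqz (mA Y) (mM Y))) by (rewrite <- (me Y); apply F0_mon).
  assert (HB : IsMonoid (sqz (F0 F e) N')) by exact (monoid_sqz_restr HA Hj Hhj' Hjh').
  pose (phi := comp (sqzmap j (idm (bcar (mM Y))))
                 (castV eq_refl (f_equal mcar (me Y)) (idm _))).
  assert (Hphi : IsMonHom (F0 F (mx Y)) (sqz (F0 F e) N') phi).
  { exact (monhom_comp (monhom_cast (me Y) (monhom_id _)) (monhom_sqzmap (mM Y) Hj Hhj')). }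
  assert (Hiso : IsIso phi).
  { exists (comp (castV (f_equal mcar (me Y)) eq_refl (idm _)) (sqzmap h1 (idm (bcar (mM Y))))).
    unfold phi; split; cbn [mcar sqz].
    - rewrite <- !comp_assoc, (comp_assoc (sqzmap h1 _)), sqzmap_comp, Hhj', comp_id_l,
        sqzmap_id, comp_id_l. apply castV_cancel1.
    - rewrite <- !comp_assoc, (comp_assoc (castV _ _ _)), castV_cancel2, comp_id_l,
        sqzmap_comp, Hjh', comp_id_l. apply sqzmap_id. }
  destruct (Hisofib (mx Y) (sqz (F0 F e) N') phi HB Hphi Hiso)
    as [Y2 [psi [e0 [[psiinv [Hpp1 Hpp2]] Hpsi]]]].
  pose (O := {| Eh := Y2; Om := N'; Oe := e0; Om_bimod := HN' |} : EModOb F e).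
  assert (HPo : castV (f_equal mcar (me Y)) (f_equal mcar e0) (F1 F psi) = sqzmap j (idm _)).
  { rewrite castV_split, Hpsi. unfold phi. cbn [mcar sqz].
    rewrite <- comp_assoc, castV_cancel2, comp_id_r. reflexivity. }
  assert (HPbim : IsBimodHom (A:=mA Y) (B:=F0 F e) j (N:=mM Y) (N':=N') (idm _)).
  { split; unfold N', restr; cbn [bl br bcar]; norm; rewrite ?Hhj', tenm_id, comp_id_r;
      reflexivity. }
  pose (P := @Build_ModEHom C M E F Y (inclE O) psi j (idm _) Hj HPbim HPo).
  assert (HQbim : IsBimodHom (A:=F0 F e) (B:=mA Y) h1 (N:=N') (N':=mM Y) (idm _)).
  { split; unfold N', restr; cbn [bl br bcar]; rewrite comp_id_l; reflexivity. }
  assert (HQo : castV (f_equal mcar e0) (f_equal mcar (me Y)) (F1 F psiinv) = sqzmap h1 (idm _)).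
  { transitivity (comp (castV (f_equal mcar e0) (f_equal mcar (me Y)) (F1 F psiinv))
                    (comp (sqzmap j (idm (bcar (mM Y)))) (sqzmap h1 (idm _)))).
    - cbn [mcar sqz]. rewrite sqzmap_comp, Hjh', comp_id_l, sqzmap_id, comp_id_r. reflexivity.
    - rewrite comp_assoc, <- HPo, <- castV_comp, <- F1_comp, Hpp1, F1_id, castV_idm, comp_id_l.
      reflexivity. }
  pose (Q := @Build_ModEHom C M E F (inclE O) Y psiinv h1 (idm _) Hh1 HQbim HQo).
  assert (HU : UnivArrowU' (inclE O) (comp psi eta)).
  { intros Z' f. destruct (Hu Z' f) as [g [Hg Hun]].
    exists (compM g Q). split.
    - simpl. rewrite <- comp_assoc, (comp_assoc psiinv), Hpp1, comp_id_l. exact Hg.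
    - intros h Hh. assert (E1 : g = compM h P).
      { apply Hun; simpl; rewrite <- comp_assoc; exact Hh. }
      subst g. apply modE_ext; simpl.
      + rewrite <- comp_assoc, Hpp2, comp_id_r; reflexivity.
      + rewrite <- comp_assoc, Hjh', comp_id_r; reflexivity.
      + rewrite !comp_id_r; reflexivity. }
  pose (eta2 := comp psi eta : hom e (Eh O)).
  pose (d := comp bp2 (castV eq_refl (f_equal mcar e0) (F1 F eta2))).
  assert (Hd1 : castV eq_refl (f_equal mcar e0) (F1 F eta2) = comp (sqzmap j (idm _)) c)
    by exact (over_comp P eta).
  assert (Hd : castV eq_refl (f_equal mcar (Oe O)) (F1 F eta2) = pairing (idm _) d).
  { change (Oe O) with e0. etransitivity; [apply pairing_eta|]. f_equal.
    pose proof (f_equal (fun x => comp bp1 x) Hd1) as K. cbv beta in K.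
    etransitivity; [exact K|].
    rewrite comp_assoc, bp1_sqzmap, <- comp_assoc, Hc1', Hjh'. reflexivity. }
  exists O, d, eta2. split; [exact HU|split; [exact Hd|]].
  unfold FirstOrderCalculus. split; [|split].
  - pose proof (monhom_cast (Oe O) (F1_hom F eta2)) as HM.
    exact (eq_rect _ (fun x => IsMonHom _ _ x) HM _ Hd).
  - exists eta2; exact Hd.
  - destruct (la_univ (LE e) (O:=O) d) as [dt [Hdt _]]. exists dt. split; [exact Hdt|].
    intros O'' p q _ Hh.
    assert (Hpq : comp (eu p) eta2 = comp (eu q) eta2).
    { apply Hfaith. apply (castV_inj (p:=eq_refl) (q:=f_equal mcar (Oe O''))).
      pose proof (over_compE p eta2) as Op. pose proof (over_compE q eta2) as Oq.
      rewrite Hd, sqzmap_pairing in Op, Oq.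
      etransitivity; [exact Op|]. etransitivity; [|symmetry; exact Oq]. f_equal.
      rewrite <- Hdt, !comp_assoc, Hh. reflexivity. }
    destruct (HU (inclE O'') (comp (eu p) eta2)) as [g [_ Hun]].
    assert (E1 := Hun (toM p) eq_refl). assert (E2 := Hun (toM q) (eq_sym Hpq)).
    rewrite E1 in E2. apply emod_ext.
    + exact (f_equal (@mu _ _ _ _ _ _) E2).
    + exact (f_equal (@mg _ _ _ _ _ _) E2).
Qed.
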